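(* Let PS1 and PS2 be pure strategies (as in the context) with $m_{PS1}$ finite, and suppose PS2 is inferior to PS1, i.e. $\Delta_{PS1}(X)\ge\Delta_{PS2}(X)$ for every $X\in\mathcal{S}_{\mathrm{non}}$ and $\Delta_{PS1}(X)>\Delta_{PS2}(X)$ for some $X\in\mathcal{S}_{\mathrm{non}}$. Then for any mixed strategy MS derived from PS1 and PS2, $\max\{m_{MS}(X):X\in\mathcal{S}\}\ge\max\{m_{PS1}(X):X\in\mathcal{S}\}$.
   Context: A fitness function $f$ on a finite set is to be maximised. A metaheuristic generates populations $\Phi_0,\Phi_1,\dots$. Let $\mathcal{S}$ be the finite set of all populations, $\mathcal{S}_{\mathrm{opt}}$ those containing at least one optimal solution, $\mathcal{S}_{\mathrm{non}}=\mathcal{S}\setminus\mathcal{S}_{\mathrm{opt}}$. The sequence is a time-homogeneous Markov chain on $\mathcal{S}$ with transition probabilities $P(X,Y)=\Pr(\Phi_{t+1}=Y\mid\Phi_t=X)$, every state of $\mathcal{S}_{\mathrm{opt}}$ absorbing. The expected hitting time $m(X)\in[0,\infty]$ is the expected number of generations until first entering $\mathcal{S}_{\mathrm{opt}}$ from $\Phi_0=X$ ($m(X)=0$ on $\mathcal{S}_{\mathrm{opt}}$). A pure strategy is such a time-independent transition matrix. PS1, PS2 are pure strategies with transition matrices $P_1,P_2$ on the same $\mathcal{S}$ (with $\mathcal{S}_{\mathrm{opt}}$ absorbing), expected hitting times $m_{PS1},m_{PS2}$. A mixed strategy MS derived from PS1 and PS2 assigns to each $X\in\mathcal{S}$ probabilities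 $P_X(PS1)\in[0,1]$, $P_X(PS2)=1-P_X(PS1)$, and has transition matrix $P_{MS}(X,Y)=P_X(PS1)P_1(X,Y)+P_X(PS2)P_2(X,Y)$, with expected hitting time $m_{MS}$. With $d(X)=m_{PS1}(X)$, for $X\in\mathcal{S}_{\mathrm{non}}$: $\Delta_{PS1}(X)=d(X)-\sum_{Y\in\mathcal{S}_{\mathrm{non}}}P_1(X,Y)d(Y)$, $\Delta_{PS2}(X)=d(X)-\sum_{Y\in\mathcal{S}_{\mathrm{non}}}P_2(X,Y)d(Y)$. *)

(* Defs.v *)
From mathcomp Require Import all_boot all_order all_algebra.
From mathcomp Require Import all_classical all_reals.
From mathcomp Require Import ereal topology normedtype sequences.
Set Implicit Arguments. Unset Strict Implicit. Unset Printing Implicit Defensive.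
Import Order.TTheory GRing.Theory Num.Theory.
Local Open Scope ring_scope.

Section Chains.
Variables (R : realType) (S : finType).

Definition stochastic (P : S -> S -> R) : Prop :=
  (forall X Y, 0 <= P X Y) /\ (forall X, \sum_(Y : S) P X Y = 1).

Definition absorbing_on (Sopt : {set S}) (P : S -> S -> R) : Prop :=
  forall X, X \in Sopt -> P X X = 1.

Fixpoint mpow (P : S -> S -> R) (t : nat) : S -> S -> R :=
  match t with
  | 0 => fun X Y => (X == Y)%:R
  | t'.+1 => fun X Y => \sum_(Z : S) mpow P t' X Z * P Z Y
  end.

(* Pr(T > t | Phi_0 = X), T = first hitting time of Sopt; since Sopt is
   absorbing, T <= t iff Phi_t \in Sopt. *)
Definition tail_prob (Sopt : {set S}) (P : S -> S -> R) (X : S) (t : nat) : R :=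
  1 - \sum_(Y in Sopt) mpow P t X Y.

(* Expected hitting time m(X) = E[T] = sum_{t>=0} Pr(T > t), in [0, +oo]. *)
Definition hitting_time (Sopt : {set S}) (P : S -> S -> R) (X : S) : \bar R :=
  (\sum_(0 <= t <oo) (tail_prob Sopt P X t)%:E)%E.

Definition mixed (p : S -> R) (P1 P2 : S -> S -> R) : S -> S -> R :=
  fun X Y => p X * P1 X Y + (1 - p X) * P2 X Y.

Definition drift (Sopt : {set S}) (d : S -> R) (P : S -> S -> R) (X : S) : R :=
  d X - \sum_(Y in ~: Sopt) P X Y * d Y.

Definition emax (f : S -> \bar R) : \bar R := (\big[maxe/-oo]_(X : S) f X)%E.

End Chains.

(* Main.v *)
Require Import Defs.
From mathcomp Require Import all_boot all_order all_algebra.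
From mathcomp Require Import all_classical all_reals.
From mathcomp Require Import ereal topology normedtype sequences.
Import Order.TTheory GRing.Theory Num.Theory.
Local Open Scope ring_scope.

Set Implicit Arguments. Unset Strict Implicit.
Section H.
Variables (R : realType) (S : finType) (Sopt : {set S}) (P : S -> S -> R).
Hypothesis (Pst : stochastic P) (Pab : absorbing_on Sopt P).

Lemma P0 X Y : X \in Sopt -> Y != X -> P X Y = 0.
Proof.
move=> XS YX; have [Pge Psum] := Pst.
have := Psum X; rewrite (bigD1 X) //= Pab // => /eqP; rewrite -subr_eq0 addrC addrK.
move=> /eqP /psumr_eq0P H; apply: H => //.
Qed.

Lemma mpow_ge0 t X Y : 0 <= mpow P t X Y.
Proof.
elim: t X Y => [|t IH] X Y /=; first by rewrite ler0n.
by apply: sumr_ge0 => Z _; apply: mulr_ge0 => //; case: Pst.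
Qed.

Lemma mpow_sum t X : \sum_Y mpow P t X Y = 1.
Proof.
elim: t X => [|t IH] X /=.
  by rewrite (bigD1 X) //= eqxx big1 ?addr0 // => Y /negbTE; rewrite eq_sym => ->.
rewrite exchange_big /= -[RHS](IH X); apply: eq_bigr => Z _.
by rewrite -mulr_sumr; case: Pst => _ ->; rewrite mulr1.
Qed.

Lemma mpowS t X Y : mpow P t.+1 X Y = \sum_Z mpow P t X Z * P Z Y.
Proof. by []. Qed.

Lemma mpowSl t X Y : mpow P t.+1 X Y = \sum_Z P X Z * mpow P t Z Y.
Proof.
elim: t X Y => [|t IH] X Y.
  rewrite /= (bigD1 X) //= eqxx mul1r big1; last first.
    by move=> Z /negbTE; rewrite eq_sym => ->; rewrite mul0r.
  rewrite (bigD1 Y) //= eqxx mulr1 big1 ?addr0 // => Z /negbTE ->; by rewrite mulr0.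
rewrite mpowS; under eq_bigr do rewrite IH mulr_suml.
rewrite exchange_big; apply: eq_bigr => Z _.
by rewrite mpowS mulr_sumr; apply: eq_bigr => W _; rewrite mulrA.
Qed.

Lemma mpow_opt t X Y : X \in Sopt -> mpow P t X Y = (X == Y)%:R.
Proof.
move=> XS; elim: t Y => [|t IH] Y //=.
under eq_bigr do rewrite IH.
rewrite (bigD1 X) // eqxx mul1r big1 => [|Z ZX]; last by rewrite eq_sym (negbTE ZX) mul0r.
rewrite Monoid.mulm1.
case: (eqVneq X Y) => [<-|YX].
  by rewrite Pab // eqxx.
by rewrite P0 // eq_sym.
Qed.

Definition a t X := \sum_(Y in ~: Sopt) mpow P t X Y.

Lemma tailE X t : tail_prob Sopt P X t = a t X.
Proof.
rewrite /tail_prob /a -(mpow_sum t X) (bigID (fun Y => Y \in Sopt)) /= addrC addrK.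
by apply: eq_bigl => Y; rewrite inE.
Qed.

Lemma a_ge0 t X : 0 <= a t X.
Proof. by apply: sumr_ge0 => Y _; apply: mpow_ge0. Qed.

Lemma a_opt t X : X \in Sopt -> a t X = 0.
Proof.
move=> XS; apply: big1 => Y; rewrite inE => YS; rewrite mpow_opt //.
by case: eqP => // E; rewrite -E XS in YS.
Qed.

Lemma a0 X : X \in ~: Sopt -> a 0 X = 1.
Proof.
move=> XS; rewrite /a (bigD1 X) //= eqxx big1 ?addr0 // => Y /andP[_ /negbTE].
by rewrite eq_sym => ->.
Qed.

Lemma aS t X : a t.+1 X = \sum_(Z in ~: Sopt) P X Z * a t Z.
Proof.
rewrite /a; under eq_bigr do rewrite mpowSl.
rewrite exchange_big /= (bigID (fun Z => Z \in Sopt)) /= big1 ?add0r; last first.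
  move=> Z ZS; rewrite -mulr_sumr; have := a_opt t ZS; rewrite /a => ->.
  by rewrite mulr0.
by apply: eq_big => [Z|Z _]; [rewrite inE | rewrite mulr_sumr].
Qed.

Definition s n X := \sum_(0 <= t < n) a t X.

Lemma sS n X : X \in ~: Sopt -> s n.+1 X = 1 + \sum_(Z in ~: Sopt) P X Z * s n Z.
Proof.
move=> XS; rewrite /s big_nat_recl // a0 //; congr (_ + _).
under eq_bigr do rewrite aS.
rewrite exchange_big /=; apply: eq_bigr => Z _; by rewrite mulr_sumr.
Qed.

Lemma htE X : hitting_time Sopt P X = (\sum_(0 <= t <oo) (a t X)%:E)%E.
Proof. by apply: eq_eseriesr => t _; rewrite tailE. Qed.

Lemma s_le X n : ((s n X)%:E <= hitting_time Sopt P X)%E.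
Proof.
rewrite htE /s -sumEFin; apply: nneseries_lim_ge => t _ _; by rewrite lee_fin a_ge0.
Qed.

Lemma ht_le X (B : R) : (forall n, s n X <= B) -> (hitting_time Sopt P X <= B%:E)%E.
Proof.
move=> HB; rewrite htE; apply: lime_le.
  by apply: is_cvg_nneseries => t _; rewrite lee_fin a_ge0.
by apply: nearW => n; rewrite sumEFin lee_fin HB.
Qed.

Lemma ht_ge0 X : (0 <= hitting_time Sopt P X)%E.
Proof. by rewrite htE; apply: nneseries_ge0 => t _ _; rewrite lee_fin a_ge0. Qed.

Lemma ht_opt X : X \in Sopt -> hitting_time Sopt P X = 0%E.
Proof. by move=> XS; rewrite htE; apply: eseries0 => t _ _; rewrite a_opt. Qed.

End H.
Unset Implicit Arguments.

From mathcomp Require Import lra.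

Theorem corollary3 (R : realType) (S : finType) (Sopt : {set S})
    (P1 P2 : S -> S -> R) :
  stochastic P1 -> stochastic P2 ->
  absorbing_on Sopt P1 -> absorbing_on Sopt P2 ->
  (forall X, hitting_time Sopt P1 X < +oo)%E ->
  (forall X, X \in ~: Sopt ->
     drift Sopt (fun Y => fine (hitting_time Sopt P1 Y)) P2 X
     <= drift Sopt (fun Y => fine (hitting_time Sopt P1 Y)) P1 X) ->
  (exists2 X, X \in ~: Sopt &
     drift Sopt (fun Y => fine (hitting_time Sopt P1 Y)) P2 X
     < drift Sopt (fun Y => fine (hitting_time Sopt P1 Y)) P1 X) ->
  forall p : S -> R, (forall X, 0 <= p X <= 1) ->
  (emax (hitting_time Sopt P1) <= emax (hitting_time Sopt (mixed p P1 P2)))%E.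
Proof.
move=> st1 st2 ab1 ab2 fin1 hle _ p hp.
set d := (fun Y => fine (hitting_time Sopt P1 Y)) in hle *.
have hd X : hitting_time Sopt P1 X = (d X)%:E.
  by rewrite /d fineK // ge0_fin_numE // ht_ge0.
have d0 X : 0 <= d X by rewrite /d fine_ge0 // ht_ge0.
have sle n X : s Sopt P1 n X <= d X.
  by have := s_le Sopt st1 X n; rewrite hd lee_fin.
have P1ge := st1.1; have P2ge := st2.1.
have key1 X : X \in ~: Sopt -> d X <= 1 + \sum_(Z in ~: Sopt) P1 X Z * d Z.
  move=> XS; rewrite -lee_fin -hd; apply: ht_le => // -[|n].
    rewrite /s big_geq // addr_ge0 // sumr_ge0 // => Z _.
    exact: mulr_ge0.
  rewrite sS // lerD2l; apply: ler_sum => Z _; apply: ler_wpM2l => //.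
have key2 X : X \in ~: Sopt -> d X <= 1 + \sum_(Z in ~: Sopt) P2 X Z * d Z.
  move=> XS; have := hle X XS; have := key1 X XS; rewrite /drift; lra.
set Pm := mixed p P1 P2.
have Pmge X Y : 0 <= Pm X Y.
  have := hp X => /andP[h0 h1].
  by rewrite /Pm /mixed addr_ge0 // mulr_ge0 // subr_ge0.
have stm : stochastic Pm.
  split; first exact: Pmge. move=> X; rewrite /Pm /mixed big_split /= -!mulr_sumr st1.2 st2.2.
  lra.
have abm : absorbing_on Sopt Pm.
  by move=> X XS; rewrite /Pm /mixed ab1 // ab2 //; lra.
have key3 X : X \in ~: Sopt -> d X <= 1 + \sum_(Z in ~: Sopt) Pm X Z * d Z.
  move=> XS; rewrite /Pm /mixed.
  under eq_bigr do rewrite mulrDl -!mulrA.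
  rewrite big_split /= -!mulr_sumr.
  have := key1 X XS; have := key2 X XS; have := hp X => /andP[h0 h1].
  nra.
set D := \big[Num.max/0]_X d X.
have hD X : d X <= D by apply: le_bigmax.
have key4 n X : X \in ~: Sopt -> d X <= s Sopt Pm n X + D * a Sopt Pm n X.
  elim: n X => [|n IH] X XS.
    by rewrite /s big_geq // add0r a0 // mulr1.
  rewrite sS // aS // mulr_sumr -addrA -big_split /=.
  apply: le_trans (key3 X XS) _; rewrite lerD2l; apply: ler_sum => Z ZS.
  by rewrite mulrCA -mulrDr; apply: ler_wpM2l => //; apply: IH.
have hpt X : (hitting_time Sopt P1 X <= hitting_time Sopt Pm X)%E.
  case XS: (X \in Sopt).
    by rewrite ht_opt // ht_ge0.
  have XN : X \in ~: Sopt by rewrite inE XS.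
  rewrite hd; case E: (hitting_time Sopt Pm X) => [r| |]; last first.
  - by have := ht_ge0 Sopt stm X; rewrite E.
  - by rewrite leey.
  rewrite lee_fin leNgt; apply/negP => rd.
  have sr n : s Sopt Pm n X <= r.
    by have := s_le Sopt stm X n; rewrite E lee_fin.
  have r0 : 0 <= r by have := ht_ge0 Sopt stm X; rewrite E lee_fin.
  have Dp : 0 < D by apply: le_lt_trans r0 (lt_le_trans rd (hD X)).
  set e := d X - r.
  have ep : 0 < e by rewrite /e subr_gt0.
  set c := e / D.
  have cp : 0 < c by rewrite /c divr_gt0.
  have cD : c * D = e by rewrite /c divfK // gt_eqF.
  have aL n : c <= a Sopt Pm n X.
    have := key4 n X XN; have := sr n; have := a_ge0 Sopt stm n X.
    rewrite -/e => h1 h2 h3.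
    by rewrite -(ler_pM2r Dp) cD mulrC /e; lra.
  have sL n : n%:R * c <= s Sopt Pm n X.
    rewrite /s; apply: le_trans (ler_sum _ (fun t _ => aL t)).
    by rewrite sumr_const_nat subn0 mulr_natl.
  set N := (Num.truncn (r / c)).+1.
  have hN : r / c < N%:R by apply: truncnS_gt.
  have rc : r / c * c = r by rewrite divfK // gt_eqF.
  have := sL N; have := sr N. nra.
rewrite /emax; elim/big_ind2: _ => //; move=> x1 x2 y1 y2 h1 h2.
exact: le_max2.
Qed.
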